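(* Let $W$ be a channel from $\{1,\dots,m\}$ to $\{1,\dots,n\}$ and let $s$ be the number of distinct values among the entries $W_{i,j}$. Then every $\lambda\in\Lambda(W)$ satisfies \[ \mathrm{w}(\lambda)\ge \max\big(\lceil\log_2 s\rceil,\ \mathrm{w}(W_{1,*}),\dots,\mathrm{w}(W_{m,*})\big). \]
   Context: A channel is a row-stochastic matrix; $\mathcal{D}$ is the set of deterministic (0-1) channels from $\{1,\dots,m\}$ to $\{1,\dots,n\}$. $\Lambda(W)=\{\lambda\text{ probability distribution on }\mathcal{D}: W=\sum_D\lambda_DD\}$. $\mathrm{w}(x)$ is the number of nonzero entries of a vector $x$ (for $\lambda$, the size of its support); $W_{i,*}$ is the $i$-th row of $W$. *)

(* Defs.v *)
From HB Require Import structures.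
From mathcomp Require Import all_boot all_order all_algebra.
Set Implicit Arguments. Unset Strict Implicit. Unset Printing Implicit Defensive.
Import Order.TTheory GRing.Theory Num.Theory.
Local Open Scope ring_scope.

Definition is_channel (R : realFieldType) (m n : nat) (W : 'M[R]_(m, n)) : Prop :=
  (forall i j, 0 <= W i j) /\ (forall i, \sum_(j < n) W i j = 1).

(* Deterministic channels are the 0-1 row-stochastic matrices; each is determined
   by the function sending row i to the column of its unique 1.  We index D by
   these functions, f : {ffun 'I_m -> 'I_n}, and detmx f is the corresponding
   0-1 matrix. *)
Definition detmx (R : realFieldType) (m n : nat) (f : {ffun 'I_m -> 'I_n})
  : 'M[R]_(m, n) := \matrix_(i, j) (f i == j)%:R.

Definition in_Lambda (R : realFieldType) (m n : nat) (W : 'M[R]_(m, n))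
  (lam : {ffun {ffun 'I_m -> 'I_n} -> R}) : Prop :=
  (forall f, 0 <= lam f) /\ (\sum_f lam f = 1) /\
  W = \sum_f lam f *: detmx R f.

Definition wdist (R : realFieldType) (m n : nat)
  (lam : {ffun {ffun 'I_m -> 'I_n} -> R}) : nat :=
  #|[set f | lam f != 0]|.

Definition wrow (R : realFieldType) (m n : nat) (W : 'M[R]_(m, n)) (i : 'I_m) : nat :=
  #|[set j | W i j != 0]|.

Definition num_values (R : realFieldType) (m n : nat) (W : 'M[R]_(m, n)) : nat :=
  size (undup [seq W i j | i <- enum 'I_m, j <- enum 'I_n]).

(* ceil(log2 s) (with the convention 0 for s <= 1) *)
Definition ceil_log2 (s : nat) : nat := up_log 2 s.

(* Main.v *)
Require Import Defs.
From HB Require Import structures.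
From mathcomp Require Import all_boot all_order all_algebra.
Import Order.TTheory GRing.Theory Num.Theory.
Local Open Scope ring_scope.

Lemma entryE (R : realFieldType) (m n : nat) (lam : {ffun {ffun 'I_m -> 'I_n} -> R}) i j :
  (\sum_f lam f *: detmx R f) i j =
  \sum_(f in [set f | (lam f != 0) && (f i == j)]) lam f.
Proof.
rewrite summxE (bigID (fun f => f \in [set f | (lam f != 0) && (f i == j)])) /=.
rewrite [X in _ + X]big1 ?addr0.
  apply: eq_bigr => f; rewrite inE => /andP[_ /eqP Hf].
  by rewrite !mxE Hf eqxx mulr1.
move=> f; rewrite inE negb_and negbK => /orP[/eqP ->|/negbTE H].
  by rewrite scale0r mxE.
by rewrite !mxE H mulr0.
Qed.

Theorem proposition13 (R : realFieldType) (m n : nat) (W : 'M[R]_(m, n))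
  (lam : {ffun {ffun 'I_m -> 'I_n} -> R}) :
  is_channel W -> in_Lambda W lam ->
  (maxn (ceil_log2 (num_values W)) (\max_(i < m) wrow W i) <= wdist lam)%N.
Proof.
move=> _ [_ [_ HW]].
set S := [set f | lam f != 0].
have Wij : forall i j, W i j = \sum_(f in [set f | (lam f != 0) && (f i == j)]) lam f.
  by move=> i j; rewrite HW entryE.
rewrite geq_max; apply/andP; split.
  rewrite /ceil_log2 /wdist -/S; apply: up_log_min => //.
  rewrite -card_powerset -(size_image (fun A : {set {ffun 'I_m -> 'I_n}} => \sum_(f in A) lam f)).
  rewrite /num_values; apply: uniq_leq_size; first exact: undup_uniq.
  move=> x; rewrite mem_undup => /allpairsP[[i j] /= [_ _ ->]].
  apply/imageP; exists [set f | (lam f != 0) && (f i == j)]; last exact: Wij.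
  by rewrite powersetE; apply/subsetP => f; rewrite !inE => /andP[].
apply/bigmax_leqP => i _.
rewrite /wrow /wdist.
apply: leq_trans (leq_imset_card (fun f : {ffun 'I_m -> 'I_n} => f i) _).
apply: subset_leq_card; apply/subsetP => j; rewrite inE => Hj.
apply/imsetP.
have [f Hf] : exists f, f \in [set f | (lam f != 0) && (f i == j)].
  apply/existsP; apply: contraNT Hj; rewrite negb_exists => /forallP H.
  by rewrite Wij big1 // => f Hf; move: (H f); rewrite Hf.
move: Hf; rewrite inE => /andP[H1 /eqP H2].
by exists f; rewrite ?inE.
Qed.
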